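(* Let $T$ be a tree on $n$ vertices, $q$ a positive integer and $C=(C_1,\dots,C_n)\in(\mathbb{Z}/q\mathbb{Z})^n$. Then the algorithm COMPUTE-EVAL-CSF$(T,q,C)$ described below terminates in $O(n^2(\log q)^2)$ time.
   Context: Algorithm COMPUTE-EVAL-SFS$(T,v,q,C)$, for a tree $T$ rooted at $v$: if $T$ is a single vertex, return the sequence $(1)$. Otherwise let $v_1,\dots,v_k$ be the neighbors of $v$ and $T_i$ the subtree rooted at $v_i$ (component of $T$ minus edge $\{v,v_i\}$ containing $v_i$). Initialize $r_1=1$, $r_j=0$ for $2\le j\le n$, and $d=1$. For $i=1,\dots,k$: copy $t_j\leftarrow r_j$ for $1\le j\le d$; recursively compute $(s_1,\dots,s_m)=$ COMPUTE-EVAL-SFS$(T_i,v_i,q,C)$ ($m$ = number of vertices of $T_i$); set $s_0\leftarrow C_1s_1+\dots+C_ms_m \bmod q$; replace $s_j\leftarrow -s_j$ for $1\le j\le m$; set $r_j\leftarrow0$ for $1\le j\le m+d$; for $1\le j\le d$ and $0\le p\le m$ set $r_{j+p}\leftarrow r_{j+p}+t_js_p \bmod q$; then $d\leftarrow d+m$. Return $(r_1,\dots,r_n)$. Algorithm COMPUTE-EVAL-CSF$(T,q,C)$: pick an arbitrary vertex $v$, compute $(r_1,\dots,r_n)=$ COMPUTE-EVAL-SFS$(T,v,q,C)$, and return $C_1r_1+\dots+C_nr_n \bmod q$. (This outputs the evaluation at $p_i\mapsto C_i$, modulo $q$, of the chromatic symmetric function of $T$ written as an integer polynomial in the power sums $p_1,\dots,p_n$.)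 Time is measured with arithmetic on residues mod $q$ costing $O((\log q)^2)$ per operation. *)

(* Defs.v *)
From mathcomp Require Import all_boot.
Set Implicit Arguments. Unset Strict Implicit. Unset Printing Implicit Defensive.

(* A tree together with a chosen root and a chosen ordering of the neighbours
   of every vertex (children = neighbours other than the parent).  This is
   exactly the data on which COMPUTE-EVAL-SFS recurses. *)
Inductive rtree : Type := Node of seq rtree.

Fixpoint rsize (t : rtree) : nat :=
  let: Node ch := t in (sumn (map rsize ch)).+1.

(* Cost model: every elementary step (arithmetic operation on residues mod q,
   assignment/copy/initialisation of a cell, update of a loop counter) is
   charged op_cost q = (bit length of q)^2, i.e. O((log q)^2).  This
   over-charges assignments, so a bound in this model is at least as strong
   as the informal one. *)
Definition bitlen (q : nat) : nat := (trunc_log 2 q).+1.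
Definition op_cost (q : nat) : nat := bitlen q ^ 2.

Definition negm (q x : nat) : nat := (q - x %% q) %% q.

(* r_{j+p} <- r_{j+p} + t_j s_p mod q, for 1<=j<=d, 0<=p<=m.
   Arrays are 0-indexed: r_j is stored at index j-1, t_j at j-1,
   s_p at index p (ss = s_0 :: s_1 :: ... :: s_m). *)
Definition mul_step (q : nat) (tt ss r : seq nat) (d m : nat) : seq nat :=
  foldl (fun r jp => let: (j, p) := jp in let k := (j + p).-1 in
           set_nth 0 r k ((nth 0 r k + nth 0 tt j.-1 * nth 0 ss p) %% q))
        r [seq (j, p) | j <- iota 1 d, p <- iota 0 m.+1].

(* COMPUTE-EVAL-SFS with instrumented running time.
   Returns ((r_1,...,r_n), time).  C j is C_j (1-indexed). *)
Fixpoint eval_sfs (q : nat) (C : nat -> nat) (t : rtree) : seq nat * nat :=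
  match t with
  | Node [::] => ([:: 1 %% q], op_cost q)
  | Node ch =>
    let n := rsize t in
    let fix loop (chs : seq rtree) (r : seq nat) (d time : nat)
        : seq nat * nat :=
      match chs with
      | [::] => (r, time)
      | c :: chs' =>
        let tt := take d r in                                  (* d copies *)
        let (s, trec) := eval_sfs q C c in
        let m := size s in
        let s0 := sumn [seq C j.+1 * nth 0 s j | j <- iota 0 m] %% q in     (* 2m ops *)
        let sneg := map (negm q) s in                          (* m ops *)
        let r1 := nseq (m + d) 0 ++ drop (m + d) r in          (* m+d ops *)
        let r2 := mul_step q tt (s0 :: sneg) r1 d m in         (* 2d(m+1) ops *)
        loop chs' r2 (d + m)                                   (* 1 op *)
             (time + trec +
              (d + 2 * m + m + (m + d) + 2 * d * m.+1 + 1) * op_cost q)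
      end in
    loop ch (1 %% q :: nseq n.-1 0) 1 ((n + 1) * op_cost q)
  end.

Definition eval_csf (q : nat) (C : nat -> nat) (t : rtree) : nat * nat :=
  let (r, time) := eval_sfs q C t in
  let n := size r in
  (sumn [seq C j.+1 * nth 0 r j | j <- iota 0 n] %% q,
   time + (2 * n + 1) * op_cost q).

Definition coeffs (n q : nat) (C : 'I_n -> 'I_q) (j : nat) : nat :=
  match insub j.-1 with Some i => nat_of_ord (C i) | None => 0 end.

Definition csf_time (n q : nat) (C : 'I_n -> 'I_q) (T : rtree) : nat :=
  (eval_csf q (coeffs C) T).2.

(* Main.v *)
Require Import Defs.
From mathcomp Require Import all_boot.
From mathcomp Require Import zify.

Section Loop.
Variables (q : nat) (C : nat -> nat).
Fixpoint myloop (chs : seq rtree) (r : seq nat) (d time : nat)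
        : seq nat * nat :=
      match chs with
      | [::] => (r, time)
      | c :: chs' =>
        let tt := take d r in
        let (s, trec) := eval_sfs q C c in
        let m := size s in
        let s0 := sumn [seq C j.+1 * nth 0 s j | j <- iota 0 m] %% q in
        let sneg := map (negm q) s in
        let r1 := nseq (m + d) 0 ++ drop (m + d) r in
        let r2 := mul_step q tt (s0 :: sneg) r1 d m in
        myloop chs' r2 (d + m)
             (time + trec +
              (d + 2 * m + m + (m + d) + 2 * d * m.+1 + 1) * op_cost q)
      end.
End Loop.

Lemma eval_node q C c ch :
  eval_sfs q C (Node (c :: ch)) =
  myloop q C (c :: ch) (1 %% q :: nseq (rsize (Node (c :: ch))).-1 0) 1
     ((rsize (Node (c :: ch)) + 1) * op_cost q).
Proof. reflexivity. Qed.

Lemma size_foldl_set q tt ss (l : seq (nat * nat)) r :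
  all (fun jp => (jp.1 + jp.2).-1 < size r) l ->
  size (foldl (fun r jp => let: (j, p) := jp in let k := (j + p).-1 in
           set_nth 0 r k ((nth 0 r k + nth 0 tt j.-1 * nth 0 ss p) %% q)) r l)
  = size r.
Proof.
elim: l r => [|[j p] l IH] r //= /andP [H1 H2].
set r' := set_nth _ _ _ _.
have Hs : size r' = size r by rewrite size_set_nth; apply/maxn_idPr.
by rewrite IH Hs.
Qed.

Lemma size_mul_step q tt ss r d m :
  d + m <= size r -> size (mul_step q tt ss r d m) = size r.
Proof.
move=> H; rewrite /mul_step size_foldl_set //.
apply/allP => -[a b] /allpairsPdep [j [p [Hj Hp [-> ->]]]] /=.
move: Hj Hp; rewrite !mem_iota => /andP [Hj1 Hj2] /andP [_ Hp2]. lia.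
Qed.

Lemma loop_bound q C (chs : seq rtree) : forall (r : seq nat) (d time : nat),
  (forall c : rtree, List.In c chs -> size (eval_sfs q C c).1 = rsize c /\
      (eval_sfs q C c).2 <= 11 * rsize c ^ 2 * op_cost q) ->
  size r = d + sumn (map rsize chs) -> 1 <= d ->
  size (myloop q C chs r d time).1 = d + sumn (map rsize chs) /\
  (myloop q C chs r d time).2 <= time + 11 * op_cost q *
     (d * sumn (map rsize chs) + sumn (map rsize chs) ^ 2).
Proof.
elim: chs => [|c chs IH] r d time Hc Hr Hd /=.
  by rewrite Hr; split => //; lia.
have [Hs Ht] := Hc c (or_introl erefl).
case E: (eval_sfs q C c) => [s trec]; rewrite E /= in Hs Ht.
rewrite Hs.
have Hm : 0 < rsize c by clear; case: c => ch /=.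
set K := op_cost q in Ht *.
move: Hr => /= Hr.
set S := sumn (map rsize chs) in IH Hr *.
set r2 := mul_step _ _ _ _ _ _.
have Hr1 : size (nseq (rsize c + d) 0 ++ drop (rsize c + d) r) = size r.
  rewrite size_cat size_nseq size_drop. lia.
have Hr2 : size r2 = d + rsize c + S.
  rewrite /r2 size_mul_step Hr1 ?Hr; lia.
have := IH r2 (d + rsize c) (time + trec +
      (d + 2 * rsize c + rsize c + (rsize c + d) + 2 * d * (rsize c).+1 + 1) * K).
case=> //.
- by move=> c' Hc'; apply: Hc; right.
- lia.
move=> H1 H2; split; first lia.
apply: leq_trans H2 _.
set m := rsize c in Ht Hm *.
have Hst : (d + 2 * m + m + (m + d) + 2 * d * m.+1 + 1) <= 11 * d * m by nia.
have Hst' := leq_mul Hst (leqnn K).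
have EE : 11 * K * (d * (m + S) + (m + S) ^ 2) =
   11 * m ^ 2 * K + 11 * d * m * K + 11 * K * ((d + m) * S + S ^ 2) + 11 * K * m * S.
  nia.
rewrite EE; lia.
Qed.

Lemma sfs_bound q C : forall N t, rsize t <= N ->
  size (eval_sfs q C t).1 = rsize t /\
  (eval_sfs q C t).2 <= 11 * rsize t ^ 2 * op_cost q.
Proof.
elim=> [|N IH] [[|c ch]] HN.
- by move: HN.
- by move: HN.
- split => // /=; lia.
rewrite eval_node.
have := loop_bound q C (c :: ch) (1 %% q :: nseq (rsize (Node (c :: ch))).-1 0) 1
   ((rsize (Node (c :: ch)) + 1) * op_cost q).
case.
- move=> c' Hc'; apply: IH.
  move: HN; rewrite /=.
  have : rsize c' <= sumn (map rsize (c :: ch)).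
    elim: (c :: ch) Hc' => [|x xs IHx] //= [->|H].
      exact: leq_addr.
    apply: leq_trans (IHx H) _; exact: leq_addl.
  simpl; lia.
- by rewrite /= size_nseq.
- by [].
move=> H1 H2; split; first by rewrite H1.
apply: leq_trans H2 _.
rewrite /=.
set S := rsize c + sumn (map rsize ch).
set K := op_cost q.
have EE : 11 * S.+1 ^ 2 * K = 11 * K * (1 * S + S ^ 2) + 11 * K * S + 11 * K by nia.
rewrite EE; lia.
Qed.

Theorem lemma3p9 :
  exists c : nat, forall (n q : nat) (T : rtree) (C : 'I_n -> 'I_q),
    rsize T = n -> 0 < q ->
    csf_time C T <= c * n ^ 2 * (trunc_log 2 q).+1 ^ 2.
Proof.
exists 14 => n q T C HT _.
rewrite /csf_time /eval_csf.
have [H1 H2] := sfs_bound q (coeffs C) _ _ (leqnn (rsize T)).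
case E: (eval_sfs q (coeffs C) T) => [r t]; rewrite E /= in H1 H2 *.
rewrite H1 HT in H2 *.
have Hn : 0 < n by rewrite -HT; case: T {E H1 H2 HT}.
move: H2; rewrite /op_cost /bitlen.
set K := (trunc_log 2 q).+1 ^ 2.
have H3 : 2 * n + 1 <= 3 * n ^ 2 by nia.
have H4 := leq_mul H3 (leqnn K).
have EE : 14 * n ^ 2 * K = 11 * n ^ 2 * K + 3 * n ^ 2 * K by nia.
rewrite EE; lia.
Qed.
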